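(* Let $\mathrm{Q}(E)\subset\mathrm{QPH}_0(E)$ be the locus where $\Phi=0$, let $\mathrm{R}(E)$ be the locus where $\Phi\ne 0$ and $L(\Phi)=E_1$ (defined when $m_1>m_2$), and for an integer $j$ let $\mathrm{S}_j(E)$ be the locus where $\Phi\neq0$, $\det\Phi=0$ and $L(\Phi)\ne E_1$ has degree $j$. Then, for every integer $m$, $$\mathrm{QPH}_0(E)=\begin{cases}\mathrm{Q}(E)\sqcup\mathrm{S}_m(E)\sqcup\mathrm{S}_{m-1}(E) & E\cong\mathcal O(m)\oplus\mathcal O(m),\\ \mathrm{Q}(E)\sqcup\mathrm{R}(E)\sqcup\mathrm{S}_m(E) & E\cong\mathcal O(m+1)\oplus\mathcal O(m),\\ \mathrm{Q}(E)\sqcup\mathrm{R}(E)\sqcup\mathrm{S}_{m-1}(E) & E\cong\mathcal O(m+1)\oplus\mathcal O(m-1),\end{cases}$$ and $\mathrm{QPH}_0(E)=\mathrm{Q}(E)\sqcup\mathrm{R}(E)$ if $m_1-m_2\ge 3$.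
   Context: Fix $z_1\in\mathbb{CP}^1\setminus\{0,1,\infty\}$, set $z_2=0$, $z_3=1$, $z_4=\infty$ and $D=z_1+z_2+z_3+z_4$. Let $E\to\mathbb{CP}^1$ be a holomorphic vector bundle of rank 2, $E\cong\mathcal O(m_1)\oplus\mathcal O(m_2)$, $m_1\ge m_2$; when $m_1>m_2$, $E_1\subset E$ is the unique subbundle isomorphic to $\mathcal O(m_1)$. A quasi-parabolic structure on $E$ is a tuple $(F_1,\dots,F_4)$ of lines $F_i\subset E|_{z_i}$. A (strongly) parabolic Higgs field compatible with it is $\Phi\in H^0(\mathbb{CP}^1,\mathrm{End}(E)\otimes K_{\mathbb{CP}^1}(D))$ such that each residue $\mathrm{Res}_{z_i}\Phi$ is nilpotent with $F_i\subset\ker\mathrm{Res}_{z_i}\Phi$. $\mathrm{QPH}(E)$ is the space of all such tuples, and $\mathrm{QPH}_0(E)$ is the subset where $\det\Phi=0$ in $H^0(\mathbb{CP}^1,K^2_{\mathbb{CP}^1}(D))$. A nonzero nilpotent $\Phi$ preserves a unique line subbundle $L(\Phi)\subset E$ (the saturation of $\ker\Phi$). *)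

(* Defs.v *)
From HB Require Import structures.
From mathcomp Require Import all_boot all_order all_algebra.
From mathcomp Require Import reals complex mpoly.
Set Implicit Arguments. Unset Strict Implicit. Unset Printing Implicit Defensive.
Import Order.TTheory GRing.Theory Num.Theory.
Local Open Scope ring_scope.

(* CP^1 has homogeneous coordinates (X_0 : X_1), affine coordinate z = X_0/X_1.
   Sections of O(k) over CP^1 = homogeneous polynomials of degree k in
   C[X_0,X_1] (zero if k < 0).  E = O(m1) (+) O(m2), a section of E is a
   column (s_1, s_2) with s_i in H^0(O(m_i)). *)

Section Model.
Variable R : realType.
Local Notation C := (R[i])%C.
Local Notation P := {mpoly C[2]}.

Definition sectO (k : int) (p : P) : Prop :=
  if (0 <= k)%R then p \is (`|k|%N).-homog else p == 0.

(* Fixed homogeneous representatives of the marked points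
   z_1 = (z1:1), z_2 = 0 = (0:1), z_3 = 1 = (1:1), z_4 = oo = (1:0).
   The fibre E|_{z_i} is identified with C^2 by evaluating the two
   components of a section at this representative. *)
Definition marked_pt (z1 : C) (i : 'I_4) : 'I_2 -> C :=
  fun k => match val i with
           | 0%N => if val k == 0%N then z1 else 1
           | 1%N => if val k == 0%N then 0 else 1
           | 2%N => 1
           | _ => if val k == 0%N then 1 else 0
           end.

(* K_{CP^1}(D) = O(2) since deg D = 4, so
   End(E) (x) K(D) = (+)_{a,b} O(m_a - m_b + 2).  A Higgs field is a 2x2 matrix
   of polynomials whose (a,b) entry is a section of O(m_a - m_b + 2). *)
Definition mdeg2 (m1 m2 : int) (a : 'I_2) : int := if val a == 0%N then m1 else m2.

Definition higgs_section (m1 m2 : int) (Phi : 'M[P]_2) : Prop :=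
  forall a b : 'I_2, sectO (mdeg2 m1 m2 a - mdeg2 m1 m2 b + 2) (Phi a b).

(* Residue of Phi at z_i, in the above trivialisation of E|_{z_i}, up to a
   nonzero scalar factor (coming from the trivialisation of K(D)|_{z_i};
   nilpotency and kernels are insensitive to it). *)
Definition residue (z1 : C) (Phi : 'M[P]_2) (i : 'I_4) : 'M[C]_2 :=
  map_mx (meval (marked_pt z1 i)) Phi.

Definition nilpotent_mx (M : 'M[C]_2) : Prop := exists n : nat, M ^+ n = 0.

(* QPH(E): a line F_i in E|_{z_i} is given by a spanning nonzero vector f i. *)
Definition QPH (m1 m2 : int) (z1 : C) (f : 'I_4 -> 'cV[C]_2) (Phi : 'M[P]_2) : Prop :=
  (forall i, f i != 0) /\ higgs_section m1 m2 Phi /\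
  forall i, nilpotent_mx (residue z1 Phi i) /\ residue z1 Phi i *m f i = 0.

Definition QPH0 m1 m2 z1 f Phi : Prop := QPH m1 m2 z1 f Phi /\ \det Phi = 0.

(* A line subbundle of E of degree j: the image of O(j) -> E given by
   (a, b) with a in H^0(O(m1 - j)), b in H^0(O(m2 - j)) without common zero
   on CP^1. *)
Definition line_subbundle (m1 m2 j : int) (a b : P) : Prop :=
  sectO (m1 - j) a /\ sectO (m2 - j) b /\
  forall v : 'I_2 -> C, (exists k, v k != 0) ->
    ~ (a.@[v] = 0 /\ b.@[v] = 0).

Definition col2 (a b : P) : 'cV[P]_2 :=
  \col_(k < 2) (if val k == 0%N then a else b).

(* L(Phi) = saturation of ker Phi is the line subbundle given by (a,b) of degree j:
   (a,b) spans a saturated line subbundle killed by Phi (such a subbundle is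
   unique for Phi <> 0 with det Phi = 0). *)
Definition L_is (m1 m2 : int) (Phi : 'M[P]_2) (j : int) (a b : P) : Prop :=
  line_subbundle m1 m2 j a b /\ Phi *m col2 a b = 0.

(* E_1 = O(m1) (+) 0 (when m1 > m2): the subbundle (a,b) equals E_1 iff b = 0. *)

Definition Qlocus m1 m2 z1 f (Phi : 'M[P]_2) : Prop :=
  QPH0 m1 m2 z1 f Phi /\ Phi = 0.

Definition Rlocus m1 m2 z1 f (Phi : 'M[P]_2) : Prop :=
  QPH0 m1 m2 z1 f Phi /\ Phi != 0 /\ exists j a b, L_is m1 m2 Phi j a b /\ b = 0.

Definition Slocus m1 m2 z1 (j : int) f (Phi : 'M[P]_2) : Prop :=
  QPH0 m1 m2 z1 f Phi /\ Phi != 0 /\ \det Phi = 0 /\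
  exists a b, L_is m1 m2 Phi j a b /\ ((m2 < m1)%R -> b != 0).

End Model.

Definition disj_union3 {T U : Type} (X A B D : T -> U -> Prop) : Prop :=
  forall t u, (X t u <-> A t u \/ B t u \/ D t u) /\
    ~ (A t u /\ B t u) /\ ~ (A t u /\ D t u) /\ ~ (B t u /\ D t u).

Definition disj_union2 {T U : Type} (X A B : T -> U -> Prop) : Prop :=
  forall t u, (X t u <-> A t u \/ B t u) /\ ~ (A t u /\ B t u).

(* Main.v *)
Require Import Defs.
From HB Require Import structures.
From mathcomp Require Import all_boot all_order all_algebra.
From mathcomp Require Import reals complex mpoly.
From mathcomp Require Import ring lra zify.
From Stdlib Require Import Classical_Prop.
Import Order.TTheory GRing.Theory Num.Theory.
Local Open Scope ring_scope.
Set Implicit Arguments. Unset Strict Implicit. Unset Printing Implicit Defensive.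

Section Aux.
Variable R : realType.
Local Notation C := (R[i])%C.
Local Notation P := {mpoly C[2]}.

Definition mon (i j : nat) : 'X_{1..2} := (U_(ord0) *+ i + U_(ord_max) *+ j)%MM.

Lemma monE i j k : mon i j k = if val k == 0%N then i else j.
Proof.
rewrite /mon mnmDE !mulmnE !mnm1E.
by case: k => [[|[|]]] //= _; rewrite ?muln0 ?mul1n ?mul0n ?addn0.
Qed.

Lemma Xmon i j : ('X_ord0 ^+ i * 'X_ord_max ^+ j : P) = 'X_[mon i j].
Proof. by rewrite /mon mpolyXD !mpolyXn. Qed.

Lemma big2 (T : Type) (idx : T) (op : Monoid.law idx) (F : 'I_2 -> T) :
  \big[op/idx]_(i < 2) F i = op (F ord0) (F ord_max).
Proof.
rewrite big_ord_recr big_ord_recl big_ord0 /=. rewrite Monoid.mulm1.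
by congr (op (F _) _); apply: val_inj.
Qed.

Lemma mdeg2E (m : 'X_{1..2}) : mdeg m = (m ord0 + m ord_max)%N.
Proof. by rewrite mdegE big2. Qed.

Lemma homog_repr d (p : P) : p \is d.-homog ->
  p = \sum_(i < d.+1) (p@_(mon i (d - i)))%:MP * ('X_ord0 ^+ i * 'X_ord_max ^+ (d - i)).
Proof.
move=> hp; apply/mpolyP => m.
rewrite raddf_sum /=.
under eq_bigr => i _ do rewrite mcoeffCM Xmon mcoeffX.
have [hd|hd] := eqVneq (mdeg m) d.
- have lt : (m ord0 < d.+1)%N by rewrite -hd mdeg2E ltnS leq_addr.
  have em : m = mon (m ord0) (d - m ord0).
    apply/mnmP => k; rewrite monE; case: k => [[|[|]]] //= lk.
    + by congr (m _); apply: val_inj.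
    + by rewrite -hd mdeg2E addKn; congr (m _); apply: val_inj.
  rewrite (bigD1 (Ordinal lt)) //= -em eqxx mulr1 big1 ?addr0 // => i ne.
  case: eqP => [e|]; last by rewrite mulr0.
  exfalso; move: ne; rewrite -(inj_eq val_inj) /=; apply/negP; rewrite negbK.
  by rewrite -e monE.
- rewrite (dhomog_nemf_coeff hp hd) big1 // => i _.
  case: eqP => [e|]; last by rewrite mulr0.
  exfalso; move: hd; rewrite -e mdeg2E !monE /= subnKC ?eqxx //.
  by rewrite -ltnS.
Qed.

Lemma eq_via (F : comRingType) (u v w k : F) : w = 0 -> u - v = k * w -> u = v.
Proof. by move=> -> e; apply/eqP; rewrite -subr_eq0 e mulr0. Qed.

Local Notation X0 := ('X_ord0 : P).
Local Notation X1 := ('X_ord_max : P).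

Definition pt (u w : C) : 'I_2 -> C := fun k => if val k == 0%N then u else w.
Definition nzv (x : 'I_2 -> C) := exists k, x k != 0.

Lemma ev_X0 x : X0.@[x] = x ord0. Proof. exact: mevalXU. Qed.
Lemma ev_X1 x : X1.@[x] = x ord_max. Proof. exact: mevalXU. Qed.

Ltac ev := rewrite ?(mevalD, mevalB, mevalN, mevalM, mevalC, ev_X0, ev_X1, meval0, meval1).

Lemma homog0E (p : P) : p \is 0.-homog -> p = (p@_(mon 0 0))%:MP.
Proof. by move=> hp; rewrite {1}(homog_repr hp) big_ord_recr big_ord0 /= subn0 add0r !expr0 !mulr1. Qed.

Lemma homog1E (p : P) : p \is 1.-homog -> exists a b : C, p = a%:MP * X0 + b%:MP * X1.
Proof.
move=> /homog_repr ->; rewrite !big_ord_recr big_ord0 /= subn0 subnn add0r !expr0 !expr1.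
by do 2 eexists; rewrite mulr1 mul1r addrC.
Qed.

Lemma homog2E (p : P) : p \is 2.-homog ->
  exists a b c : C, p = a%:MP * (X0 * X0) + b%:MP * (X0 * X1) + c%:MP * (X1 * X1).
Proof.
move=> /homog_repr ->; rewrite !big_ord_recr big_ord0 /= subnn subn0 (_ : (2 - 1 = 1)%N) //.
by exists (p@_(mon 2 0)), (p@_(mon 1 1)), (p@_(mon 0 2)); ring. Qed.


Lemma homogC (c : C) : (c%:MP : P) \is 0.-homog.
Proof. by rewrite dhomogE msuppC; case: eqP => /=; rewrite ?mdeg0. Qed.

Lemma homogX (k : 'I_2) : ('X_k : P) \is 1.-homog.
Proof. by rewrite dhomogX; apply/eqP; apply: mdeg1. Qed.

Lemma homog_lin (a b : C) : a%:MP * X0 + b%:MP * X1 \is 1.-homog.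
Proof. by apply: dhomogD; apply: (dhomogM (homogC _) (homogX _)). Qed.


Lemma nzvE x : nzv x -> x ord0 != 0 \/ x ord_max != 0.
Proof.
case=> k; case: k => [[|[|]]] // lk hk.
- by left; rewrite (_ : ord0 = Ordinal lk) //; apply: val_inj.
- by right; rewrite (_ : ord_max = Ordinal lk) //; apply: val_inj.
Qed.

Lemma nzv_pt u w : u != 0 \/ w != 0 -> nzv (pt u w).
Proof. by case=> h; [exists ord0 | exists ord_max]. Qed.

Definition ell (x : 'I_2 -> C) : P := (x ord_max)%:MP * X0 - (x ord0)%:MP * X1.

Lemma ell_root x : (ell x).@[x] = 0.
Proof. rewrite /ell; ev; ring. Qed.

Lemma ellE x : ell x = (x ord_max)%:MP * X0 + (- x ord0)%:MP * X1.
Proof. by rewrite /ell rmorphN mulNr. Qed.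

Lemma ell_homog x : ell x \is 1.-homog.
Proof. by rewrite ellE homog_lin. Qed.

Lemma ell_neq0 x : nzv x -> ell x != 0.
Proof.
move=> /nzvE h; apply/eqP => e.
have h1 := congr1 (meval (pt 1 0)) e.
have h2 := congr1 (meval (pt 0 1)) e.
move: h1 h2; rewrite /ell; ev; rewrite /pt /=.
rewrite !mulr1 !mulr0 subr0 sub0r => h1 /eqP; rewrite oppr_eq0 => /eqP h2.
by case: h; rewrite ?h1 ?h2 eqxx.
Qed.

Lemma FT1 (f : P) x : f \is 1.-homog -> nzv x -> f.@[x] = 0 ->
  exists c : C, f = c%:MP * ell x.
Proof.
move=> /homog1E [a [b ->]] /nzvE hx; ev => e.
have E c : c%:MP * ell x = (c * x ord_max)%:MP * X0 + (- (c * x ord0))%:MP * X1.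
  by rewrite /ell !rmorphN !rmorphM /=; ring.
have [h1|h1] := eqVneq (x ord_max) 0.
- have h0 : x ord0 != 0 by case: hx => //; rewrite h1 eqxx.
  exists (- b / x ord0); rewrite E; congr (_%:MP * _ + _%:MP * _).
  + rewrite h1 mulr0; move: e; rewrite h1 mulr0 addr0 => /eqP.
    by rewrite mulf_eq0 (negbTE h0) orbF => /eqP.
  + by field.
- exists (a / x ord_max); rewrite E; congr (_%:MP * _ + _%:MP * _).
  + by field.
  + by apply: (eq_via (k := (x ord_max)^-1) e); field.
Qed.

Lemma FT2 (f : P) x : f \is 2.-homog -> nzv x -> f.@[x] = 0 ->
  exists g : P, g \is 1.-homog /\ f = ell x * g.
Proof.
move=> /homog2E [a [b [c ->]]] /nzvE hx; ev => e.
have E g0 g1 : ell x * (g0%:MP * X0 + g1%:MP * X1) =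
   (x ord_max * g0)%:MP * (X0 * X0) + (x ord_max * g1 - x ord0 * g0)%:MP * (X0 * X1)
   + (- (x ord0 * g1))%:MP * (X1 * X1).
  by rewrite /ell !rmorphN !rmorphB !rmorphM /=; ring.
have [h1|h1] := eqVneq (x ord_max) 0.
- have h0 : x ord0 != 0 by case: hx => //; rewrite h1 eqxx.
  exists ((- b / x ord0)%:MP * X0 + (- c / x ord0)%:MP * X1); split; first exact: homog_lin.
  rewrite E; congr (_%:MP * _ + _%:MP * _ + _%:MP * _).
  + rewrite h1 mul0r; move: e; rewrite h1 !mulr0 !addr0 => /eqP.
    by rewrite !mulf_eq0 (negbTE h0) !orbF => /eqP.
  + by rewrite h1; field.
  + by field.
- exists ((a / x ord_max)%:MP * X0 + ((b + x ord0 * (a / x ord_max)) / x ord_max)%:MP * X1).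
  split; first exact: homog_lin.
  rewrite E; congr (_%:MP * _ + _%:MP * _ + _%:MP * _).
  + by field.
  + by field.
  + by apply: (eq_via (k := (x ord_max ^+ 2)^-1) e); field.
Qed.

Lemma R1 (f : P) : f \is 1.-homog -> exists x, nzv x /\ f.@[x] = 0.
Proof.
move=> /homog1E [a [b ->]].
have [ea|na] := eqVneq a 0.
- exists (pt 1 0); split; first by apply: nzv_pt; left; rewrite oner_eq0.
  by ev; rewrite /pt /= ea; ring.
- exists (pt (- b) a); split; first by apply: nzv_pt; right.
  by ev; rewrite /pt /=; ring.
Qed.

Lemma R2 (f : P) : f \is 2.-homog -> exists x, nzv x /\ f.@[x] = 0.
Proof.
move=> /homog2E [a [b [c ->]]].
have [ea|na] := eqVneq a 0.
- exists (pt 1 0); split; first by apply: nzv_pt; left; rewrite oner_eq0.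
  by ev; rewrite /pt /= ea; ring.
- set s := sqrtC (b ^+ 2 - 4 * a * c).
  have hs : s ^+ 2 = b ^+ 2 - 4 * a * c by rewrite /s sqrtCK.
  exists (pt ((- b + s) / (2 * a)) 1); split; first by apply: nzv_pt; right; rewrite oner_eq0.
  ev; rewrite /pt /=.
  have h2 : (2 : C) != 0 by rewrite pnatr_eq0.
  have hw : s ^+ 2 - (b ^+ 2 - 4 * a * c) = 0 by rewrite hs subrr.
  by apply: (eq_via (k := (4 * a)^-1) hw); field.
Qed.


Lemma det2 (Q : comRingType) (M : 'M[Q]_2) :
  \det M = M ord0 ord0 * M ord_max ord_max - M ord0 ord_max * M ord_max ord0.
Proof.
rewrite (expand_det_row _ ord0) big2 /cofactor !det_mx11 !mxE /=.
have -> : lift ord0 0 = ord_max :> 'I_2 by apply: val_inj.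
have -> : lift ord_max 0 = ord0 :> 'I_2 by apply: val_inj.
rewrite add0n expr0 expr1; ring.
Qed.

Lemma tr2 (Q : comRingType) (M : 'M[Q]_2) : \tr M = M ord0 ord0 + M ord_max ord_max.
Proof. by rewrite /mxtrace big2. Qed.

Lemma mulmx2E (Q : comRingType) m n (A : 'M[Q]_(m, 2)) (B : 'M[Q]_(2, n)) i j :
  (A *m B) i j = A i ord0 * B ord0 j + A i ord_max * B ord_max j.
Proof. by rewrite mxE big2. Qed.

Lemma ord2P (k : 'I_2) : k = ord0 \/ k = ord_max.
Proof. by case: k => [[|[|]]] // lk; [left|right]; apply: val_inj. Qed.

Lemma nilp_tr (F : fieldType) (M : 'M[F]_2) : (exists n, M ^+ n = 0) ->
  M ord0 ord0 + M ord_max ord_max = 0.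
Proof.
case=> n hn.
set t := M ord0 ord0 + M ord_max ord_max.
have hd : \det M = 0.
  case: n hn => [|n] hn.
    by have := congr1 (fun A : 'M[F]_2 => A ord0 ord0) hn; rewrite expr0 !mxE /= => /eqP; rewrite oner_eq0.
  have dX k : \det (M ^+ k) = (\det M) ^+ k.
    elim: k => [|k ih]; first by rewrite !expr0 det1.
    by rewrite !exprS -mulmxE det_mulmx ih.
  by apply/eqP; have := dX n.+1; rewrite hn det0 => /esym/eqP; rewrite expf_eq0.
have hM : M ^+ 2 = t *: M.
  apply/matrixP => i j; rewrite expr2 -mulmxE mulmx2E mxE /t.
  move: hd; rewrite det2 => hd.
  by case: (ord2P i) => ->; case: (ord2P j) => ->; first [by apply: (eq_via (k := -1) hd); ring | by apply: (eq_via (k := 0) hd); ring].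
have hk k : M ^+ k.+1 = t ^+ k *: M.
  elim: k => [|k ih]; first by rewrite expr1 expr0 scale1r.
  by rewrite exprSr ih -scalerAl -expr2 hM scalerA -exprSr.
case: n hn => [|n] hn.
  by have := congr1 (fun A : 'M[F]_2 => A ord0 ord0) hn; rewrite expr0 !mxE /= => /eqP; rewrite oner_eq0.
move: hn; rewrite hk => /eqP; rewrite scaler_eq0 expf_eq0 => /orP [/andP [_ /eqP //]|/eqP hM0].
by rewrite /t hM0 !mxE addr0.
Qed.

Lemma sectO_nat (n : nat) (p : P) : sectO n%:Z p <-> p \is n.-homog.
Proof. by rewrite /sectO /=. Qed.

Lemma sectO2 (p : P) : sectO 2 p <-> p \is 2.-homog.
Proof. by rewrite /sectO /=. Qed.
Lemma sectO1 (p : P) : sectO 1 p <-> p \is 1.-homog.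
Proof. by rewrite /sectO /=. Qed.
Lemma sectOz (p : P) : sectO 0 p <-> p \is 0.-homog.
Proof. by rewrite /sectO /=. Qed.

Lemma sectO_neg k (p : P) : k < 0 -> sectO k p -> p = 0.
Proof. by rewrite /sectO => /lt_geF -> /eqP. Qed.

Lemma sectO_0 k : sectO k (0 : P).
Proof. by rewrite /sectO; case: ifP => // _; apply: dhomog0. Qed.

Lemma mul_col2 (M : 'M[P]_2) a b :
  M *m col2 a b = 0 <-> M ord0 ord0 * a + M ord0 ord_max * b = 0 /\
                        M ord_max ord0 * a + M ord_max ord_max * b = 0.
Proof.
split.
- move=> h; split.
  + by have := congr1 (fun A : 'cV[P]_2 => A ord0 ord0) h; rewrite mulmx2E !mxE.
  + by have := congr1 (fun A : 'cV[P]_2 => A ord_max ord0) h; rewrite mulmx2E !mxE.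
- case=> h0 h1; apply/matrixP => i j; rewrite mulmx2E !mxE /=.
  by case: (ord2P i) => ->.
Qed.

Lemma trace0 m1 m2 z1 f (Phi : 'M[P]_2) : QPH m1 m2 z1 f Phi ->
  Phi ord_max ord_max = - Phi ord0 ord0.
Proof.
case=> _ [hig hres].
have h00 : Phi ord0 ord0 \is 2.-homog by have := hig ord0 ord0; rewrite subrr add0r => /sectO2.
have h11 : Phi ord_max ord_max \is 2.-homog.
  by have := hig ord_max ord_max; rewrite subrr add0r => /sectO2.
have ht : Phi ord0 ord0 + Phi ord_max ord_max \is 2.-homog by apply: dhomogD.
have ev i : (Phi ord0 ord0 + Phi ord_max ord_max).@[marked_pt z1 i] = 0.
  by have := nilp_tr (hres i).1; rewrite !mxE mevalD.
have e1 := ev (Ordinal (isT : (1 < 4)%N)).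
have e2 := ev (Ordinal (isT : (2 < 4)%N)).
have e3 := ev (Ordinal (isT : (3 < 4)%N)).
have [a [b [c et]]] := homog2E ht.
rewrite et in e1 e2 e3; move: e1 e2 e3; ev; rewrite /marked_pt /= => e1 e2 e3.
have ec : c = 0 by apply: (eq_via (k := 1) e1); ring.
have ea : a = 0 by apply: (eq_via (k := 1) e3); ring.
have eb : b = 0 by rewrite ea ec in e2; apply: (eq_via (k := 1) e2); ring.
apply/eqP; rewrite -addr_eq0 addrC et ea eb ec !mul0r !addr0 //.
Qed.

Lemma det_rel (Phi : 'M[P]_2) : \det Phi = 0 -> Phi ord_max ord_max = - Phi ord0 ord0 ->
  Phi ord0 ord0 * Phi ord0 ord0 + Phi ord0 ord_max * Phi ord_max ord0 = 0.
Proof. by rewrite det2 => hd h; rewrite h in hd; apply: (eq_via (k := -1) hd); ring. Qed.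

Lemma cancel0 (D : idomainType) (x y : D) : x != 0 -> x * y = 0 -> y = 0.
Proof. by move=> hx /eqP; rewrite mulf_eq0 (negbTE hx) => /eqP. Qed.

Lemma kern (p q r L a b : P) : p * p + q * r = 0 -> r != 0 -> p = L * a -> r = L * b ->
  p * a + q * b = 0 /\ r * a + (- p) * b = 0.
Proof.
move=> h rn ep er; split; last by rewrite ep er; ring.
apply: (cancel0 rn); rewrite ep er in h *.
by apply: (eq_via (k := b) h); ring.
Qed.

Lemma uniq_ker (M : 'M[P]_2) a b a' b' : M != 0 ->
  M *m col2 a b = 0 -> M *m col2 a' b' = 0 -> a * b' = a' * b.
Proof.
move=> hM /mul_col2 [h0 h1] /mul_col2 [h0' h1'].
apply/eqP; rewrite -subr_eq0; apply/negPn/negP => hD.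
case/negP: hM; apply/eqP/matrixP => i j; rewrite mxE.
have key (x y : P) : x * a + y * b = 0 -> x * a' + y * b' = 0 -> x = 0 /\ y = 0.
  move=> e e'; split.
  - apply: (cancel0 hD); apply: (eq_via (k := 1) (w := b' * (x * a + y * b) - b * (x * a' + y * b'))).
      by rewrite e e' !mulr0 subrr.
    ring.
  - apply: (cancel0 hD); apply: (eq_via (k := 1) (w := a * (x * a' + y * b') - a' * (x * a + y * b))).
      by rewrite e e' !mulr0 subrr.
    ring.
case: (ord2P i) => ->; case: (ord2P j) => ->.
- by case: (key _ _ h0 h0').
- by case: (key _ _ h0 h0').
- by case: (key _ _ h1 h1').
- by case: (key _ _ h1 h1').
Qed.

Lemma ls_nz m1 m2 j (a b : P) : line_subbundle m1 m2 j a b -> ~ (a = 0 /\ b = 0).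
Proof.
case=> _ [_ h] [ea eb]; apply: (h (pt 1 0)); first by apply: nzv_pt; left; rewrite oner_eq0.
by rewrite ea eb meval0.
Qed.

Lemma notRS m1 m2 z1 j f (Phi : 'M[P]_2) : m2 < m1 ->
  Rlocus m1 m2 z1 f Phi -> Slocus m1 m2 z1 j f Phi -> False.
Proof.
move=> hm [_ [hP [j0 [a [b [[hls hk] eb]]]]]] [_ [_ [_ [a' [b' [[_ hk'] hb']]]]]].
have hb'0 := hb' hm.
have ha : a != 0 by apply/eqP => ea; apply: (ls_nz hls).
have := uniq_ker hP hk hk'; rewrite eb mulr0 => /eqP.
by rewrite mulf_eq0 (negbTE ha) (negbTE hb'0).
Qed.

Lemma notSS m z1 f (Phi : 'M[P]_2) :
  Slocus m m z1 m f Phi -> Slocus m m z1 (m - 1) f Phi -> False.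
Proof.
move=> [_ [hP [_ [a [b [[hls hk] _]]]]]] [_ [_ [_ [a' [b' [[hls' hk'] _]]]]]].
have e := uniq_ker hP hk hk'.
have nz := ls_nz hls.
case: hls => ha [hb _]; case: hls' => ha' [hb' hnz'].
move: ha hb ha' hb'; rewrite subrr (_ : m - (m - 1) = 1); last by ring.
move=> /sectOz /homog0E ea /sectOz /homog0E eb /sectO1 ha' /sectO1 hb'.
rewrite ea eb in e nz.
have [ha0|ha0] := eqVneq (a@_(mon 0 0)) 0.
- have hb0 : b@_(mon 0 0) != 0 by apply/eqP => hb0; apply: nz; rewrite ha0 hb0.
  have [y [ny ry]] := R1 hb'.
  apply: (hnz' y ny); split => //.
  have := congr1 (meval y) e; ev; rewrite ry mulr0 => /esym/eqP.
  by rewrite mulf_eq0 (negbTE hb0) orbF => /eqP.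
- have [y [ny ry]] := R1 ha'.
  apply: (hnz' y ny); split => //.
  have := congr1 (meval y) e; ev; rewrite ry mul0r => /eqP.
  by rewrite mulf_eq0 (negbTE ha0) => /eqP.
Qed.

Lemma pp0 (p q : P) : p * p + q * 0 = 0 -> p = 0.
Proof. by rewrite mulr0 addr0 => /eqP; rewrite mulf_eq0 orbb => /eqP. Qed.

Lemma R_of m1 m2 z1 f (Phi : 'M[P]_2) : QPH0 m1 m2 z1 f Phi -> Phi != 0 ->
  Phi ord_max ord0 = 0 -> Rlocus m1 m2 z1 f Phi.
Proof.
move=> hQ hP hr; split => //; split => //.
have ht := trace0 hQ.1.
have hpq := det_rel hQ.2 ht.
rewrite hr in hpq; have hp := pp0 hpq.
exists m1, 1, 0; split => //; split.
- split; first by rewrite subrr; apply/sectOz; apply: dhomog1.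
  split; first exact: sectO_0.
  by move=> v _ []; rewrite meval1 => /eqP; rewrite oner_eq0.
- by apply/mul_col2; rewrite hp hr !mul0r !mulr0 !addr0.
Qed.

Lemma p_root (p q r : P) x : p * p + q * r = 0 -> r.@[x] = 0 -> p.@[x] = 0.
Proof.
move=> h rx; have := congr1 (meval x) h; ev; rewrite rx mulr0 addr0 => /eqP.
by rewrite mulf_eq0 orbb => /eqP.
Qed.

Lemma caseBal m z1 f (Phi : 'M[P]_2) : QPH0 m m z1 f Phi -> Phi != 0 ->
  Slocus m m z1 m f Phi \/ Slocus m m z1 (m - 1) f Phi.
Proof.
move=> hQ hP.
have ht := trace0 hQ.1.
have hpq := det_rel hQ.2 ht.
have hig := hQ.1.2.1.
have hr : Phi ord_max ord0 \is 2.-homog.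
  by have := hig ord_max ord0; rewrite /= subrr add0r => /sectO2.
have hp : Phi ord0 ord0 \is 2.-homog.
  by have := hig ord0 ord0; rewrite /= subrr add0r => /sectO2.
have [r0|rn] := eqVneq (Phi ord_max ord0) 0.
- left; split => //; split => //; split; first exact: hQ.2.
  rewrite r0 in hpq; have hp0 := pp0 hpq.
  exists 1, 0; split; last by rewrite ltxx.
  split.
  + split; first by rewrite subrr; apply/sectOz; apply: dhomog1.
    split; first exact: sectO_0.
    by move=> v _ []; rewrite meval1 => /eqP; rewrite oner_eq0.
  + by apply/mul_col2; rewrite hp0 r0 !mul0r !mulr0 !addr0.
- have [x [nx rx]] := R2 hr.
  have px := p_root hpq rx.
  have [p' [hp' ep]] := FT2 hp nx px.
  have [r' [hr' er]] := FT2 hr nx rx.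
  have [[y [ny [py ry]]] | hnc] := classic (exists y, nzv y /\ p'.@[y] = 0 /\ r'.@[y] = 0).
  + left; have [k1 ek1] := FT1 hp' ny py; have [k2 ek2] := FT1 hr' ny ry.
    have ep2 : Phi ord0 ord0 = (ell x * ell y) * k1%:MP by rewrite ep ek1; ring.
    have er2 : Phi ord_max ord0 = (ell x * ell y) * k2%:MP by rewrite er ek2; ring.
    have k2n : k2 != 0 by apply/eqP => k0; move: rn; rewrite er2 k0 mulr0 eqxx.
    split => //; split => //; split; first exact: hQ.2.
    exists k1%:MP, k2%:MP; split; last by rewrite ltxx.
    split.
    * split; first by rewrite subrr; apply/sectOz; apply: homogC.
      split; first by rewrite subrr; apply/sectOz; apply: homogC.
      by move=> v _ []; rewrite !mevalC => _ /eqP; rewrite (negbTE k2n).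
    * apply/mul_col2; rewrite ht; exact: kern hpq rn ep2 er2.
  + right; split => //; split => //; split; first exact: hQ.2.
    exists p', r'; split; last by rewrite ltxx.
    split.
    * rewrite /line_subbundle (_ : m - (m - 1) = 1); last by ring.
      split; first exact/sectO1.
      split; first exact/sectO1.
      by move=> v nv [h1 h2]; apply: hnc; exists v.
    * apply/mul_col2; rewrite ht; exact: kern hpq rn ep er.
Qed.

Lemma case1 m z1 f (Phi : 'M[P]_2) : QPH0 (m + 1) m z1 f Phi -> Phi != 0 ->
  Rlocus (m + 1) m z1 f Phi \/ Slocus (m + 1) m z1 m f Phi.
Proof.
move=> hQ hP.
have ht := trace0 hQ.1.
have hpq := det_rel hQ.2 ht.
have hig := hQ.1.2.1.
have hr : Phi ord_max ord0 \is 1.-homog.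
  have := hig ord_max ord0; rewrite /= (_ : m - (m + 1) + 2 = 1); last by ring.
  by move/sectO1.
have hp : Phi ord0 ord0 \is 2.-homog.
  by have := hig ord0 ord0; rewrite /= subrr add0r => /sectO2.
have [r0|rn] := eqVneq (Phi ord_max ord0) 0; first by left; apply: R_of.
right.
have [x [nx rx]] := R1 hr.
have px := p_root hpq rx.
have [s' [hs' ep]] := FT2 hp nx px.
have [k ek] := FT1 hr nx rx.
have er : Phi ord_max ord0 = ell x * k%:MP by rewrite ek mulrC.
have kn : k != 0 by apply/eqP => k0; move: rn; rewrite er k0 mulr0 eqxx.
have kn' : (k%:MP : P) != 0 by apply/eqP => /(congr1 (meval (pt 1 0))); rewrite mevalC meval0; apply/eqP.
split => //; split => //; split; first exact: hQ.2.
exists s', k%:MP; split => //.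
split.
- rewrite /line_subbundle subrr (_ : m + 1 - m = 1); last by ring.
  split; first exact/sectO1.
  split; first by apply/sectOz; apply: homogC.
  by move=> v _ []; rewrite !mevalC => _ /eqP; rewrite (negbTE kn).
- apply/mul_col2; rewrite ht; exact: kern hpq rn ep er.
Qed.

Lemma case2 m z1 f (Phi : 'M[P]_2) : QPH0 (m + 1) (m - 1) z1 f Phi -> Phi != 0 ->
  Rlocus (m + 1) (m - 1) z1 f Phi \/ Slocus (m + 1) (m - 1) z1 (m - 1) f Phi.
Proof.
move=> hQ hP.
have ht := trace0 hQ.1.
have hpq := det_rel hQ.2 ht.
have hig := hQ.1.2.1.
have hr : Phi ord_max ord0 \is 0.-homog.
  have := hig ord_max ord0; rewrite /= (_ : m - 1 - (m + 1) + 2 = 0); last by ring.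
  by move/sectOz.
have hp : Phi ord0 ord0 \is 2.-homog.
  by have := hig ord0 ord0; rewrite /= subrr add0r => /sectO2.
have [r0|rn] := eqVneq (Phi ord_max ord0) 0; first by left; apply: R_of.
right.
set k := (Phi ord_max ord0)@_(mon 0 0).
have er : Phi ord_max ord0 = k%:MP by exact: homog0E.
have kn : k != 0 by apply/eqP => k0; move: rn; rewrite er k0 eqxx.
split => //; split => //; split; first exact: hQ.2.
exists (Phi ord0 ord0), (Phi ord_max ord0); split => //.
split.
- rewrite /line_subbundle subrr (_ : m + 1 - (m - 1) = 2); last by ring.
  split; first exact/sectO2.
  split; first exact/sectOz.
  by move=> v _ []; rewrite er !mevalC => _ /eqP; rewrite (negbTE kn).
- apply/mul_col2; rewrite ht; apply: (kern (L := 1)) hpq rn _ _; by rewrite mul1r.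
Qed.

Lemma case3 m1 m2 z1 f (Phi : 'M[P]_2) : 3 <= m1 - m2 -> QPH0 m1 m2 z1 f Phi -> Phi != 0 ->
  Rlocus m1 m2 z1 f Phi.
Proof.
move=> hm hQ hP; apply: R_of => //.
apply: (sectO_neg _ (hQ.1.2.1 ord_max ord0)); rewrite /mdeg2 /=; lia.
Qed.

Lemma mk_disj3 m1 m2 z1 (B D : ('I_4 -> 'cV[C]_2) -> 'M[P]_2 -> Prop) :
  (forall f Phi, B f Phi -> QPH0 m1 m2 z1 f Phi /\ Phi != 0) ->
  (forall f Phi, D f Phi -> QPH0 m1 m2 z1 f Phi /\ Phi != 0) ->
  (forall f Phi, QPH0 m1 m2 z1 f Phi -> Phi != 0 -> B f Phi \/ D f Phi) ->
  (forall f Phi, B f Phi -> D f Phi -> False) ->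
  disj_union3 (QPH0 m1 m2 z1) (Qlocus m1 m2 z1) B D.
Proof.
move=> hB hD hc hBD f Phi; split; last split; last split.
- split.
  + move=> hQ; have [P0|Pn] := eqVneq Phi 0; first by left.
    by right; apply: hc.
  + by case=> [[]|[/hB []|/hD []]].
- by case=> [[_ ->]] /hB [_ /eqP].
- by case=> [[_ ->]] /hD [_ /eqP].
- by case=> /hBD.
Qed.

Lemma mk_disj2 m1 m2 z1 (B : ('I_4 -> 'cV[C]_2) -> 'M[P]_2 -> Prop) :
  (forall f Phi, B f Phi -> QPH0 m1 m2 z1 f Phi /\ Phi != 0) ->
  (forall f Phi, QPH0 m1 m2 z1 f Phi -> Phi != 0 -> B f Phi) ->
  disj_union2 (QPH0 m1 m2 z1) (Qlocus m1 m2 z1) B.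
Proof.
move=> hB hc f Phi; split.
- split.
  + move=> hQ; have [P0|Pn] := eqVneq Phi 0; first by left.
    by right; apply: hc.
  + by case=> [[]|/hB []].
- by case=> [[_ ->]] /hB [_ /eqP].
Qed.

End Aux.

Theorem corollary4p4 (R : realType) (z1 : R[i]%C) (hz0 : z1 != 0) (hz1 : z1 != 1)
    (m1 m2 : int) (hm : m2 <= m1) :
  (forall m : int,
     (m1 = m /\ m2 = m ->
        disj_union3 (QPH0 m1 m2 z1) (Qlocus m1 m2 z1)
          (Slocus m1 m2 z1 m) (Slocus m1 m2 z1 (m - 1))) /\
     (m1 = m + 1 /\ m2 = m ->
        disj_union3 (QPH0 m1 m2 z1) (Qlocus m1 m2 z1)
          (Rlocus m1 m2 z1) (Slocus m1 m2 z1 m)) /\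
     (m1 = m + 1 /\ m2 = m - 1 ->
        disj_union3 (QPH0 m1 m2 z1) (Qlocus m1 m2 z1)
          (Rlocus m1 m2 z1) (Slocus m1 m2 z1 (m - 1)))) /\
  (3 <= m1 - m2 ->
     disj_union2 (QPH0 m1 m2 z1) (Qlocus m1 m2 z1) (Rlocus m1 m2 z1)).
Proof.
split.
- move=> m; split; last split.
  + case=> -> ->; apply: mk_disj3.
    * by move=> f Phi [hQ [hP _]].
    * by move=> f Phi [hQ [hP _]].
    * by move=> f Phi; apply: caseBal.
    * by move=> f Phi; apply: notSS.
  + case=> -> ->; apply: mk_disj3.
    * by move=> f Phi [hQ [hP _]].
    * by move=> f Phi [hQ [hP _]].
    * by move=> f Phi; apply: case1.
    * by move=> f Phi; apply: notRS; rewrite ltrDl.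
  + case=> -> ->; apply: mk_disj3.
    * by move=> f Phi [hQ [hP _]].
    * by move=> f Phi [hQ [hP _]].
    * by move=> f Phi; apply: case2.
    * by move=> f Phi; apply: notRS; lia.
- move=> h3; apply: mk_disj2.
  + by move=> f Phi [hQ [hP _]].
  + by move=> f Phi; apply: case3.
Qed.
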